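(* For $\alpha\in[1,3)\cup(7,9]$ let $$\rho^{(4)}_\alpha=\tfrac1{16}\big(3P^+_4+\alpha\,\Pi_1+3\,\Pi_2+(10-\alpha)\Pi_3\big)$$ on $\mathbb{C}^4\otimes\mathbb{C}^4$. Then for every such $\alpha$ there exist $a,b,c,d\ge0$ satisfying either (Class I) $a+c=2$, $b+d=1$, $bd=(1-a)^2$, or (Class II) $a+c=1$, $b+d=2$, $ac=(1-b)^2$, such that $\mathrm{Tr}\big(\rho^{(4)}_\alpha W[a,b,c,d]\big)<0$.
   Context: $\{|i\rangle\}_{i=1}^4$ is the standard basis of $\mathbb{C}^4$, $|ij\rangle=|i\rangle\otimes|j\rangle$, indices modulo 4. $P^+_4=\frac14\sum_{i,j=1}^4|ii\rangle\langle jj|$, $\Pi_k=\frac14\sum_{l=1}^4|l,l+k\rangle\langle l,l+k|$, and $W[a,b,c,d]=\sum_{i=1}^4\big[a|ii\rangle\langle ii|+b|i,i+1\rangle\langle i,i+1|+c|i,i+2\rangle\langle i,i+2|+d|i,i+3\rangle\langle i,i+3|\big]-\sum_{i\neq j}|ii\rangle\langle jj|$. *)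

(* Defs.v *)
From HB Require Import structures.
From mathcomp Require Import all_boot all_order all_algebra.
Set Implicit Arguments. Unset Strict Implicit. Unset Printing Implicit Defensive.
Import Order.TTheory GRing.Theory Num.Theory.
Local Open Scope ring_scope.

Section Defs.
Variable R : rcfType.

(* basis vector |i j> of C^4 (x) C^4, identified with the standard basis
   of the 16-dimensional space via the row-major pairing mxvec_index *)
Definition ket2 (i j : 'I_4) : 'cV[R]_(4 * 4) := delta_mx (mxvec_index i j) 0.

Definition outer (u v : 'cV[R]_(4 * 4)) : 'M[R]_(4 * 4) := u *m v^T.

Definition addm4 (i : 'I_4) (k : nat) : 'I_4 := inord ((i + k) %% 4).

Definition Pplus4 : 'M[R]_(4 * 4) :=
  (1 / 4%:R) *: \sum_(i < 4) \sum_(j < 4) outer (ket2 i i) (ket2 j j).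

Definition Pik (k : nat) : 'M[R]_(4 * 4) :=
  (1 / 4%:R) *: \sum_(l < 4) outer (ket2 l (addm4 l k)) (ket2 l (addm4 l k)).

Definition Wmx (a b c d : R) : 'M[R]_(4 * 4) :=
  \sum_(i < 4) (a *: outer (ket2 i i) (ket2 i i)
              + b *: outer (ket2 i (addm4 i 1)) (ket2 i (addm4 i 1))
              + c *: outer (ket2 i (addm4 i 2)) (ket2 i (addm4 i 2))
              + d *: outer (ket2 i (addm4 i 3)) (ket2 i (addm4 i 3)))
  - \sum_(i < 4) \sum_(j < 4 | i != j) outer (ket2 i i) (ket2 j j).

Definition rho4 (alpha : R) : 'M[R]_(4 * 4) :=
  (1 / 16%:R) *: (3%:R *: Pplus4 + alpha *: Pik 1 + 3%:R *: Pik 2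
                  + (10%:R - alpha) *: Pik 3).

End Defs.

(* Main.v *)
Require Import Defs.
From HB Require Import structures.
From mathcomp Require Import all_boot all_order all_algebra ring lra.
Import Order.TTheory GRing.Theory Num.Theory.
Local Open Scope ring_scope.

Section S.
Variable R : rcfType.

Lemma idx_eq (i j k l : 'I_4) :
  (mxvec_index i j == mxvec_index k l) = ((val i == val k) && (val j == val l)).
Proof.
by rewrite (inj_eq (@cast_ord_inj _ _ _)) (inj_eq (@enum_rank_inj _)) xpair_eqE.
Qed.

Lemma outerE (i j k l : 'I_4) :
  outer (ket2 R i j) (ket2 R k l) = delta_mx (mxvec_index i j) (mxvec_index k l).
Proof. by rewrite /outer /ket2 trmx_delta mul_delta_mx. Qed.

Lemma tr_delta n (a b : 'I_n) : \tr (delta_mx a b : 'M[R]_n) = (a == b)%:R.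
Proof.
rewrite /mxtrace (bigD1 a) //= mxE eqxx /= big1 ?addr0.
  by rewrite eq_sym.
by move=> k /negbTE nk; rewrite mxE nk.
Qed.

Lemma trdd (i j k l p q r s : 'I_4) :
  \tr (outer (ket2 R i j) (ket2 R k l) *m outer (ket2 R p q) (ket2 R r s)) =
  ((val k == val p) && (val l == val q))%:R * ((val i == val r) && (val j == val s))%:R.
Proof.
rewrite !outerE mul_delta_mx_cond idx_eq raddfMn /= tr_delta idx_eq.
by case: (_ && _); case: (_ && _); rewrite ?mulr1n ?mulr0n ?mul1r ?mul0r ?mulr0.
Qed.

Lemma sAl n (x : R) (A B : 'M[R]_n) : x *: A *m B = x *: (A *m B).
Proof. by rewrite scalemxAl. Qed.
Lemma sAr n (x : R) (A B : 'M[R]_n) : A *m (x *: B) = x *: (A *m B).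
Proof. by rewrite scalemxAr. Qed.

Lemma tr_sumL (F : 'I_4 -> 'M[R]_(4*4)) B :
  \tr ((\sum_i F i) *m B) = \sum_i \tr (F i *m B).
Proof. by rewrite mulmx_suml raddf_sum. Qed.
Lemma tr_sumR (F : 'I_4 -> 'M[R]_(4*4)) A :
  \tr (A *m (\sum_i F i)) = \sum_i \tr (A *m F i).
Proof. by rewrite mulmx_sumr raddf_sum. Qed.

Lemma LP (p q r s : 'I_4) :
  \tr (Pplus4 R *m outer (ket2 R p q) (ket2 R r s)) =
  1 / 4%:R * \sum_(m < 4) \sum_(n < 4)
     (((val n == val p) && (val n == val q))%:R * ((val m == val r) && (val m == val s))%:R).
Proof.
rewrite /Pplus4 sAl mxtraceZ tr_sumL; congr (_ * _); apply: eq_bigr => m _.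
by rewrite tr_sumL; apply: eq_bigr => n _; rewrite trdd.
Qed.

Lemma LPi k (p q r s : 'I_4) :
  \tr (Pik R k *m outer (ket2 R p q) (ket2 R r s)) =
  1 / 4%:R * \sum_(l < 4)
     (((val l == val p) && (val (addm4 l k) == val q))%:R *
      ((val l == val r) && (val (addm4 l k) == val s))%:R).
Proof.
rewrite /Pik sAl mxtraceZ tr_sumL; congr (_ * _); apply: eq_bigr => l _.
by rewrite trdd.
Qed.

Lemma Lrho alpha (X : 'M[R]_(4*4)) :
  \tr (rho4 alpha *m X) = 1 / 16%:R * (3%:R * \tr (Pplus4 R *m X) +
     alpha * \tr (Pik R 1 *m X) + 3%:R * \tr (Pik R 2 *m X) +
     (10%:R - alpha) * \tr (Pik R 3 *m X)).
Proof.
by rewrite /rho4 sAl mxtraceZ !mulmxDl !sAl !mxtraceD !mxtraceZ.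
Qed.

Lemma LW (A : 'M[R]_(4*4)) a b c d :
  \tr (A *m Wmx a b c d) =
  \sum_(i < 4) (a * \tr (A *m outer (ket2 R i i) (ket2 R i i))
              + b * \tr (A *m outer (ket2 R i (addm4 i 1)) (ket2 R i (addm4 i 1)))
              + c * \tr (A *m outer (ket2 R i (addm4 i 2)) (ket2 R i (addm4 i 2)))
              + d * \tr (A *m outer (ket2 R i (addm4 i 3)) (ket2 R i (addm4 i 3))))
  - \sum_(i < 4) \sum_(j < 4) (if i != j then \tr (A *m outer (ket2 R i i) (ket2 R j j)) else 0).
Proof.
rewrite /Wmx mulmxBr raddfB /= tr_sumR; congr (_ - _).
  by apply: eq_bigr => i _; rewrite !mulmxDr !sAr !mxtraceD !mxtraceZ.
rewrite tr_sumR; apply: eq_bigr => i _.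
rewrite big_mkcond tr_sumR; apply: eq_bigr => j _.
by case: (i != j); rewrite ?mulmx0 ?mxtrace0.
Qed.

Lemma addm4E (i : 'I_4) k : val (addm4 i k) = ((i + k) %% 4)%N.
Proof. by rewrite /addm4 /= inordK // ltn_pmod. Qed.

Ltac fin := rewrite Lrho LP !LPi;
  rewrite !big_ord_recr !big_ord0 !addm4E /=; field; done.

Lemma T0 alpha (i : 'I_4) :
  \tr (rho4 alpha *m outer (ket2 R i i) (ket2 R i i)) = 3%:R / 64%:R.
Proof. by case: i => [[|[|[|[|?]]]] Hi] //; fin. Qed.
Lemma T1 alpha (i : 'I_4) :
  \tr (rho4 alpha *m outer (ket2 R i (addm4 i 1)) (ket2 R i (addm4 i 1))) = alpha / 64%:R.
Proof. by case: i => [[|[|[|[|?]]]] Hi] //; fin. Qed.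
Lemma T2 alpha (i : 'I_4) :
  \tr (rho4 alpha *m outer (ket2 R i (addm4 i 2)) (ket2 R i (addm4 i 2))) = 3%:R / 64%:R.
Proof. by case: i => [[|[|[|[|?]]]] Hi] //; fin. Qed.
Lemma T3 alpha (i : 'I_4) :
  \tr (rho4 alpha *m outer (ket2 R i (addm4 i 3)) (ket2 R i (addm4 i 3))) = (10%:R - alpha) / 64%:R.
Proof. by case: i => [[|[|[|[|?]]]] Hi] //; fin. Qed.
Lemma Toff alpha (i j : 'I_4) :
  (if i != j then \tr (rho4 alpha *m outer (ket2 R i i) (ket2 R j j)) else 0)
  = (if i != j then 3%:R / 64%:R else 0).
Proof.
case: ifP => // Hij.
move: Hij; case: i => [[|[|[|[|?]]]] Hi] //; case: j => [[|[|[|[|?]]]] Hj] // _; fin.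
Qed.

Lemma trace_formula (alpha a b c d : R) :
  \tr (rho4 alpha *m Wmx a b c d) =
  (1/16%:R) * (3%:R * (a - 3%:R) + alpha * b + 3%:R * c + (10%:R - alpha) * d).
Proof.
rewrite LW.
have -> : \sum_(i < 4) \sum_(j < 4) (if i != j then
     \tr (rho4 alpha *m outer (ket2 R i i) (ket2 R j j)) else 0)
   = \sum_(i < 4) \sum_(j < 4) (if i != j then 3%:R / 64%:R else 0 : R).
  by apply: eq_bigr => i _; apply: eq_bigr => j _; exact: Toff.
under eq_bigr => i _ do rewrite T0 T1 T2 T3.
rewrite !big_ord_recr !big_ord0 /=.
field; done.
Qed.
End S.

Theorem mainTheorem4 (R : rcfType) (alpha : R) :
  ((1 <= alpha < 3%:R) \/ (7%:R < alpha <= 9%:R)) ->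
  exists a b c d : R,
    [/\ 0 <= a, 0 <= b, 0 <= c & 0 <= d] /\
    ((a + c = 2%:R /\ b + d = 1 /\ b * d = (1 - a) ^+ 2) \/
     (a + c = 1 /\ b + d = 2%:R /\ a * c = (1 - b) ^+ 2)) /\
    \tr (rho4 alpha *m Wmx a b c d) < 0.
Proof.
case=> /andP [h1 h2].
- exists 1, 1, 1, 0; split; first by rewrite !ler01 lexx.
  split; first by left; split; [|split]; rewrite ?subrr ?expr0n /=; ring.
  rewrite trace_formula; lra.
- exists 1, 0, 1, 1; split; first by rewrite !ler01 lexx.
  split; first by left; split; [|split]; rewrite ?subrr ?expr0n /=; ring.
  rewrite trace_formula; lra.
Qed.
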